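(* For every integer $k\geq 2$ and every tree $T$, $\nu_{k}(T) \geq \frac{\nu_{k-1}(T) + \nu_{k+1}(T)}{2}$.
   Context: For $k\geq 1$, $\nu_k(T)$ is the maximum number of edges of a $k$-edge-colorable subgraph of $T$ (a subgraph whose edges can be colored with $k$ colors so that adjacent edges get distinct colors). *)

(* Defs.v *)
From mathcomp Require Import all_boot.
Set Implicit Arguments. Unset Strict Implicit. Unset Printing Implicit Defensive.

Definition simple_graph (V : finType) (e : rel V) : Prop :=
  symmetric e /\ irreflexive e.

Definition edges (V : finType) (e : rel V) : {set {set V}} :=
  [set [set p.1; p.2] | p in [pred p : V * V | e p.1 p.2]].

Definition is_tree (V : finType) (e : rel V) : Prop :=
  [/\ simple_graph e, 0 < #|V|,
      (forall x y : V, connect e x y) & #|edges e| = #|V| - 1].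

Definition edge_colorable (V : finType) (k : nat) (F : {set {set V}}) : bool :=
  [exists c : {ffun {set V} -> 'I_k},
    [forall f in F, forall g in F,
       (f != g) && ~~ [disjoint f & g] ==> (c f != c g)]].

Definition nu (V : finType) (e : rel V) (k : nat) : nat :=
  \max_(F : {set {set V}} | (F \subset edges e) && edge_colorable k F) #|F|.

(* Main.v *)
Require Import Defs.
From mathcomp Require Import all_boot zify.
Set Implicit Arguments. Unset Strict Implicit. Unset Printing Implicit Defensive.

Section G.
Variable V : finType.
Implicit Types (F A B D : {set {set V}}) (v w x y : V).

Definition rE F : rel V := fun a b => [set a; b] \in F.
Definition cls F v : {set V} := [set w | connect (rE F) v w].
Definition classes F : {set {set V}} := cls F @: [set: V].
Definition deg A v := #|[set f in A | v \in f]|.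

Lemma reach (r : rel V) (P : {set V}) x y :
  (forall a b, r a b -> a \in P -> b \in P) -> connect r x y -> x \in P -> y \in P.
Proof.
move=> cl /connectP[p pp ->]; elim: p x pp => //= z p IH x /andP[rxz pz] xP.
exact: (IH z pz (cl _ _ rxz xP)).
Qed.

Lemma rE_sym F : symmetric (rE F).
Proof. by move=> a b; rewrite /rE setUC. Qed.

Lemma conn_sym F a b : connect (rE F) a b = connect (rE F) b a.
Proof. exact: (sym_connect_sym (@rE_sym F)). Qed.

Lemma cls_eq F a b : connect (rE F) a b -> cls F a = cls F b.
Proof.
move=> ab; apply/setP => w; rewrite !inE; apply/idP/idP => h.
  by apply: connect_trans h; rewrite conn_sym.
exact: connect_trans ab h.
Qed.

Lemma classes0 : #|classes set0| = #|V|.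
Proof.
rewrite /classes card_imset ?cardsT // => a b E.
have : b \in cls set0 a by rewrite E inE connect0.
rewrite inE => h.
have cl : forall c d, rE set0 c d -> c \in [set a] -> d \in [set a].
  by move=> c d; rewrite /rE in_set0.
have := reach cl h; rewrite !inE eqxx => /(_ isT) /eqP -> //.
Qed.

Lemma rE_sub F f : subrel (rE (F :\ f)) (rE F).
Proof. by move=> a b; rewrite /rE !inE => /andP[]. Qed.

Lemma conn_del F f x y v w : f = [set x; y] -> connect (rE F) v w ->
  ~~ connect (rE (F :\ f)) v x -> ~~ connect (rE (F :\ f)) v y ->
  connect (rE (F :\ f)) v w.
Proof.
move=> fE h nx ny.
have cl : forall a b, rE F a b -> a \in cls (F :\ f) v -> b \in cls (F :\ f) v.
  move=> a b ab; rewrite !inE => va.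
  case: (eqVneq [set a; b] f) => [abf|abf].
    have : a \in f by rewrite -abf !inE eqxx.
    rewrite fE !inE => /orP[] /eqP ax; subst a; by [rewrite va in nx | rewrite va in ny].
  apply: connect_trans va (connect1 _).
  by rewrite /rE !inE abf.
have := reach cl h; rewrite !inE; apply; exact: connect0.
Qed.

Lemma classes_del F f x y : f \in F -> f = [set x; y] ->
  #|classes (F :\ f)| <= #|classes F| + 1.
Proof.
move=> fF fE.
have sub : classes (F :\ f) \subset
   (classes F :\ cls F x) :|: [set cls (F :\ f) x; cls (F :\ f) y].
  apply/subsetP => C /imsetP[v _ ->].
  case vx: (connect (rE (F :\ f)) v x).
    by rewrite (cls_eq vx) !inE eqxx !orbT.
  case vy: (connect (rE (F :\ f)) v y).
    by rewrite (cls_eq vy) !inE eqxx !orbT.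
  have e1 : cls (F :\ f) v = cls F v.
    apply/setP => w; rewrite !inE; apply/idP/idP => h.
      exact: (connect_sub (fun a b ab => connect1 (rE_sub ab)) h).
    by apply: (conn_del fE h); rewrite ?vx ?vy.
  rewrite e1 !inE; apply/orP; left; apply/andP; split; last first.
    by apply/imsetP; exists v; rewrite ?inE.
  apply/eqP => E.
  have : v \in cls F x by rewrite -E inE connect0.
  rewrite inE conn_sym => /(conn_del fE); rewrite vx vy => /(_ isT isT).
  by [].
have h1 := subset_leq_card sub.
have xin : cls F x \in classes F by apply/imsetP; exists x; rewrite ?inE.
have h2 := cardsD1 (cls F x) (classes F); rewrite xin add1n in h2.
have h3 := (leq_card_setU (classes F :\ cls F x) [set cls (F :\ f) x; cls (F :\ f) y]).1.
have h4 : #|[set cls (F :\ f) x; cls (F :\ f) y]| <= 2 by rewrite cards2; case: (_ != _).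
apply: (leq_trans h1); apply: (leq_trans h3); rewrite h2.
apply: (leq_trans (leq_add (leqnn _) h4)); rewrite addn2 addn1; exact: leqnn.
Qed.

Lemma LB F : (forall f, f \in F -> exists x y, f = [set x; y]) ->
  #|V| <= #|F| + #|classes F|.
Proof.
move eqn : #|F| => n; elim: n F eqn => [|n IH] F eqn hF.
  by rewrite (cards0_eq eqn) classes0.
have : 0 < #|F| by rewrite eqn.
case/card_gt0P => f fF; have [x [y fE]] := hF f fF.
have cF' : #|F :\ f| = n by move: (cardsD1 f F); rewrite fF eqn; lia.
have := IH _ cF' (fun g g' => hF g (subsetP (subsetDl F [set f]) g g')).
have := classes_del fF fE; lia.
Qed.

Lemma sum_mem (T : finType) (A : {set T}) : \sum_x (x \in A : nat) = #|A|.
Proof. by rewrite -sum1_card [RHS]big_mkcond /=; apply: eq_bigr => x _; case: (x \in A). Qed.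

Lemma degE D v : deg D v = \sum_(f in D) (v \in f : nat).
Proof.
rewrite /deg -sum_mem [RHS]big_mkcond /=; apply: eq_bigr => f _; rewrite !inE.
by case: (f \in D).
Qed.

Lemma deg_sum D : (forall f, f \in D -> #|f| = 2) -> \sum_v deg D v = 2 * #|D|.
Proof.
move=> h2; rewrite (eq_bigr _ (fun v _ => degE D v)).
rewrite exchange_big /= -sum1_card big_distrr /=; apply: eq_big => // f fD.
by rewrite sum_mem h2 // muln1.
Qed.

Lemma edges_form (e : rel V) f : f \in edges e -> exists x y, e x y /\ f = [set x; y].
Proof. by case/imsetP => p; rewrite inE => ep ->; exists p.1, p.2. Qed.

Lemma edges_card (e : rel V) f : irreflexive e -> f \in edges e -> #|f| = 2.
Proof.
move=> irr /edges_form [x [y [exy ->]]]; rewrite cards2.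
by case: (eqVneq x y) exy => // ->; rewrite irr.
Qed.

Lemma e_rE (e : rel V) a b : e a b -> rE (edges e) a b.
Proof. by move=> eab; apply/imsetP; exists (a, b). Qed.

Lemma leaf (e : rel V) D : is_tree e -> D \subset edges e -> D != set0 ->
  exists v, deg D v = 1.
Proof.
case=> [[sym irr] n0 conn cE] DE Dn0.
case: (boolP [exists v, deg D v == 1]) => [/existsP[v /eqP]|/existsPn hn]; first by eauto.
exfalso.
set F := edges e :\: D.
have cF : #|F| = #|edges e| - #|D| by rewrite cardsDS.
have hLB := LB (F := F) (fun f fF => match edges_form (subsetP (subsetDl _ _) f fF) with
   ex_intro x (ex_intro y (conj _ h)) => ex_intro _ x (ex_intro _ y h) end).
set S := [set v | 0 < deg D v].
have hS : #|S| <= #|D|.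
  have := deg_sum (D := D) (fun f fD => edges_card irr (subsetP DE f fD)).
  have : \sum_v ((v \in S : nat) * 2) <= \sum_v deg D v.
    apply: leq_sum => v _; rewrite inE; have := hn v.
    by case: (deg D v) => [|[|k]].
  rewrite -big_distrl /= sum_mem; lia.
have hC : classes F \subset cls F @: S.
  apply/subsetP => C /imsetP[v _ ->].
  case: (boolP [exists s in S, connect (rE F) v s]) => [/existsP[s /andP[sS vs]]|/exists_inPn hS'].
    by rewrite (cls_eq vs); apply/imsetP; exists s.
  exfalso; move/set0Pn: Dn0 => [d dD].
  have [p1 [p2 [ep ed]]] := edges_form (subsetP DE d dD).
  have p1S : p1 \in S.
    rewrite inE /deg card_gt0; apply/set0Pn; exists d; rewrite !inE dD ed !inE eqxx //.
  have cl : forall a b, rE (edges e) a b -> a \in cls F v -> b \in cls F v.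
    move=> a b ab; rewrite !inE => va.
    case: (boolP ([set a; b] \in D)) => abD.
      have aS : a \in S.
        rewrite inE /deg card_gt0; apply/set0Pn; exists [set a; b]; rewrite !inE abD eqxx //.
      by move: (hS' a aS); rewrite va.
    by apply: connect_trans va (connect1 _); rewrite /rE !inE abD.
  have cv : connect (rE (edges e)) v p1.
    exact: (connect_sub (fun a b ab => connect1 (e_rE ab)) (conn v p1)).
  have := reach cl cv; rewrite !inE connect0 => /(_ isT) vp.
  by move: (hS' p1 p1S); rewrite vp.
have := leq_imset_card (cls F) S.
have := subset_leq_card hC.
have := subset_leq_card DE.
move: hLB cF hS; rewrite cE.
move=> h1 h2 h3 h4 h5 h6.
have h7 := leq_trans h5 (leq_trans h6 h3).
have h8 := leq_trans h1 (leq_add (leqnn _) h7).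
rewrite h2 subnK // in h8.
by move: h8; rewrite leqNgt ltn_subrL n0.
Qed.

Lemma degID A B v : deg A v = deg (A :&: B) v + deg (A :\: B) v.
Proof. by rewrite !degE (big_setID B). Qed.

Lemma deg_le A B v : A \subset B -> deg A v <= deg B v.
Proof. by move=> AB; rewrite (degID B A) (setIidPr AB) leq_addr. Qed.

Lemma degU A B v : [disjoint A & B] -> deg (A :|: B) v = deg A v + deg B v.
Proof.
move=> dAB; rewrite (degID (A :|: B) A) setUK; congr (_ + _).
rewrite setDUl setDv set0U; have -> : B :\: A = B by apply/setDidPl; rewrite disjoint_sym.
done.
Qed.

Lemma degU1 f A v : f \notin A -> deg (f |: A) v = (v \in f) + deg A v.
Proof. by move=> fA; rewrite !degE big_setU1. Qed.

Lemma degD1 f A v : f \in A -> deg A v = (v \in f) + deg (A :\ f) v.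
Proof. by move=> fA; rewrite !degE (big_setD1 _ fA). Qed.

Lemma leaf_edge (e : rel V) D : is_tree e -> D \subset edges e -> D != set0 ->
  exists v0 f u, [/\ f \in D, v0 \in f, u \in f /\ u != v0,
    (forall g, g \in D -> v0 \in g -> g = f) &
    (forall w, w \in f -> w != v0 -> w = u)].
Proof.
move=> tr DE Dn0; have [v0 /eqP] := leaf tr DE Dn0.
rewrite /deg => /cards1P [f hf].
have : f \in [set g in D | v0 \in g] by rewrite hf inE.
rewrite inE => /andP[fD v0f].
have uniq : forall g, g \in D -> v0 \in g -> g = f.
  move=> g gD v0g; have : g \in [set g in D | v0 \in g] by rewrite inE gD.
  by rewrite hf inE => /eqP.
have irr : irreflexive e by case: tr => [[]].
have [p1 [p2 [ep fE]]] := edges_form (subsetP DE f fD).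
have p12 : p1 != p2 by apply/eqP => E; rewrite E irr in ep.
exists v0, f, (if p1 == v0 then p2 else p1); split => //; first split.
- by rewrite fE; case: ifP; rewrite !inE eqxx ?orbT.
- move: v0f; rewrite fE !inE; case: (eqVneq p1 v0) => [<-|h] //=.
  by rewrite eq_sym.
- move: v0f; rewrite fE => v0f w; rewrite !inE; case: (eqVneq p1 v0) => [<-|h] /=.
    by case/orP => /eqP -> //; rewrite eqxx.
  move: v0f; rewrite !inE eq_sym (negbTE h) /= => /eqP ->.
  by case/orP => /eqP -> //; rewrite eqxx.
Qed.

Lemma not_disj (f g : {set V}) w : w \in f -> w \in g -> ~~ [disjoint f & g].
Proof. by move=> wf wg; apply/negP => /disjointFr /(_ wf); rewrite wg. Qed.

Lemma col_deg k F v : edge_colorable k F -> deg F v <= k.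
Proof.
case/existsP => c /forall_inP hc.
rewrite /deg -(@card_in_imset _ _ c).
  by apply: leq_trans (max_card _) _; rewrite card_ord.
move=> f g; rewrite !inE => /andP[fF vf] /andP[gF vg] cfg.
apply/eqP; apply/negPn/negP => nfg.
have := forall_inP (hc f fF) g gF; rewrite nfg (not_disj vf vg) cfg eqxx.
done.
Qed.

Lemma disj_wit (f g : {set V}) : ~~ [disjoint f & g] -> exists w, w \in f /\ w \in g.
Proof. by rewrite -setI_eq0 => /set0Pn [w]; rewrite inE => /andP[]; eauto. Qed.

Lemma deg_col (e : rel V) k F : is_tree e -> 0 < k -> F \subset edges e ->
  (forall v, deg F v <= k) -> edge_colorable k F.
Proof.
move=> tr k0; move eqn: #|F| => n; elim: n F eqn => [|n IH] F eqn FE hd.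
  rewrite (cards0_eq eqn); apply/existsP; exists [ffun => Ordinal k0].
  by apply/forall_inP => f; rewrite inE.
have Fn0 : F != set0 by rewrite -card_gt0 eqn.
have [v0 [f [u [fF v0f [uf uv0] uniq other]]]] := leaf_edge tr FE Fn0.
set F' := F :\ f.
have cF' : #|F'| = n by move: (cardsD1 f F); rewrite fF eqn add1n => [[]].
have := IH F' cF' (subset_trans (subsetDl _ _) FE)
  (fun v => leq_trans (deg_le v (subsetDl _ _)) (hd v)).
case/existsP => c' /forall_inP hc'.
set U := c' @: [set g in F' | u \in g].
have hU : #|U| < k.
  apply: leq_ltn_trans (leq_imset_card _ _) _.
  by have := hd u; rewrite (degD1 u fF) uf.
have [col colU] : exists col, col \notin U.
  have : 0 < #|~: U| by move: (cardsC U); rewrite card_ord; lia.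
  by case/card_gt0P => col; rewrite inE; eauto.
have key : forall h, h \in F -> h != f -> ~~ [disjoint f & h] -> col != c' h.
  move=> h hF hf /disj_wit [w [wf wh]].
  have wv0 : w != v0 by apply/eqP => E; subst w; rewrite (uniq h hF wh) eqxx in hf.
  have E := other w wf wv0; rewrite E in wh.
  have : c' h \in U by apply/imsetP; exists h; rewrite // !inE hf hF wh.
  by move=> cU; apply/eqP => E2; rewrite E2 cU in colU.
apply/existsP; exists [ffun g => if g == f then col else c' g].
apply/forall_inP => g gF; apply/forall_inP => h hF; rewrite !ffunE.
case: (eqVneq g f) => [->|gf]; case: (eqVneq h f) => [->|hf] //=.
- by apply/implyP => nd; exact: key h hF hf nd.
- apply/implyP => /andP[_ nd]; rewrite eq_sym; apply: (key g gF gf).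
  by rewrite disjoint_sym.
- have gF' : g \in F' by rewrite !inE gf.
  have hF' : h \in F' by rewrite !inE hf.
  exact: forall_inP (hc' g gF') h hF'.
Qed.

Lemma deg0 v : deg set0 v = 0.
Proof. by rewrite degE big_set0. Qed.

Lemma bal_split (e : rel V) D : is_tree e -> D \subset edges e ->
  exists D1, D1 \subset D /\ forall v,
    2 * deg D1 v <= deg D v + 1 /\ 2 * deg (D :\: D1) v <= deg D v + 1.
Proof.
move=> tr; move eqn: #|D| => n; elim: n D eqn => [|n IH] D eqn DE.
  rewrite (cards0_eq eqn); exists set0; split; first exact: sub0set.
  by move=> v; rewrite setD0 deg0.
have Dn0 : D != set0 by rewrite -card_gt0 eqn.
have [v0 [f [u [fD v0f [uf uv0] uniq other]]]] := leaf_edge tr DE Dn0.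
set D' := D :\ f.
have cD' : #|D'| = n by move: (cardsD1 f D); rewrite fD eqn add1n => [[]].
have [D1' [sub1 hb]] := IH D' cD' (subset_trans (subsetDl _ _) DE).
set D2' := D' :\: D1'.
have fD1' : f \notin D1' by apply/negP => /(subsetP sub1); rewrite !inE eqxx.
have fD2' : f \notin D2' by rewrite !inE eqxx andbF.
have dD : forall w, deg D w = (w \in f) + deg D' w by move=> w; apply: degD1.
have dD' : forall w, deg D' w = deg D1' w + deg D2' w.
  by move=> w; rewrite (degID D' D1') (setIidPr sub1).
have dv0 : deg D' v0 = 0.
  rewrite degE big1 // => g; rewrite !inE => /andP[gf gD].
  by case: (boolP (v0 \in g)) => // /(uniq g gD) E; rewrite E eqxx in gf.
have wf : forall w, w \in f -> w = v0 \/ w = u.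
  by move=> w wf; case: (eqVneq w v0) => [->|h]; [left | right; apply: other].
case: (leqP (deg D1' u) (deg D2' u)) => hu.
  exists (f |: D1'); split.
    by apply/subsetP => g; rewrite !inE => /orP[/eqP ->|/(subsetP sub1)] //; rewrite inE => /andP[].
  have -> : D :\: (f |: D1') = D2' by rewrite /D2' /D' setDDl.
  move=> w; rewrite (degU1 _ fD1') dD dD'; have [h1 h2] := hb w; rewrite dD' -/D2' in h1 h2.
  case: (boolP (w \in f)) => wF /=; last by lia.
  case: (wf w wF) => E; subst w.
    by move: dv0; rewrite dD' => ?; lia.
  by lia.
exists D1'; split.
  exact: (subset_trans sub1 (subsetDl _ _)).
have -> : D :\: D1' = f |: D2'.
  apply/setP => g; rewrite !inE; case: (eqVneq g f) => [->|gf] /=.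
    by rewrite fD (negbTE fD1').
  by [].
move=> w; rewrite (degU1 _ fD2') dD dD'; have [h1 h2] := hb w; rewrite dD' -/D2' in h1 h2.
case: (boolP (w \in f)) => wF /=; last by lia.
case: (wf w wF) => E; subst w.
  by move: dv0; rewrite dD' => ?; lia.
by lia.
Qed.

Lemma nu_ge (e : rel V) k F : F \subset edges e -> edge_colorable k F -> #|F| <= nu e k.
Proof.
move=> h1 h2.
by apply: (@leq_bigmax_cond _ (fun F => (F \subset edges e) && edge_colorable k F) (fun F => #|F|) F); rewrite h1 h2.
Qed.

Lemma nu_att (e : rel V) k : 0 < k ->
  exists F, [/\ F \subset edges e, edge_colorable k F & nu e k = #|F|].
Proof.
move=> k0.
pose P := fun F : {set {set V}} => (F \subset edges e) && edge_colorable k F.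
have P0 : P set0.
  rewrite /P sub0set /=; apply/existsP; exists [ffun => Ordinal k0].
  by apply/forall_inP => f; rewrite inE.
case: (@arg_maxnP _ set0 P (fun F => #|F|) P0) => F /andP[h1 h2] hmax.
exists F; split => //; apply/eqP; rewrite eqn_leq nu_ge // andbT.
by apply/bigmax_leqP => G PG; apply: hmax.
Qed.
End G.

Lemma cardU_disj (T : finType) (A B : {set T}) : [disjoint A & B] -> #|A :|: B| = #|A| + #|B|.
Proof. by move=> d; apply/eqP; rewrite (leq_card_setU A B).2. Qed.

Unset Implicit Arguments.
Set Strict Implicit.
Theorem corollary1 (V : finType) (e : rel V) (k : nat) :
  2 <= k -> is_tree e ->
  nu e (k.-1) + nu e (k.+1) <= 2 * nu e k.
Proof.
move=> k2 tr.
have k0 : 0 < k by case: k k2 => [|[|k]].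
have k1 : 0 < k.-1 by case: k k2 k0 => [|[|k]].
have [F1 [E1 C1 ->]] := nu_att e k1.
have [F2 [E2 C2 ->]] := nu_att e (ltn0Sn k).
set C := F1 :&: F2; set X := F1 :\: F2; set Y := F2 :\: F1; set D := X :|: Y.
have DE : D \subset edges e.
  apply/subsetP => g; rewrite !inE => /orP[/andP[_ g1]|/andP[_ g2]].
    exact: (subsetP E1 g g1).
  exact: (subsetP E2 g g2).
have CE : C \subset edges e by apply: subset_trans E1; apply: subsetIl.
have [D1 [sD1 hb]] := bal_split tr DE.
set D2 := D :\: D1.
have dXY : [disjoint X & Y].
  by rewrite -setI_eq0; apply/eqP/setP => g; rewrite !inE; case: (g \in F1); case: (g \in F2).
have dCD : [disjoint C & D].
  by rewrite -setI_eq0; apply/eqP/setP => g; rewrite !inE; case: (g \in F1); case: (g \in F2).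
have dCD1 : [disjoint C & D1] := disjointWr sD1 dCD.
have dCD2 : [disjoint C & D2] := disjointWr (subsetDl D D1) dCD.
have G1E : C :|: D1 \subset edges e by rewrite subUset CE (subset_trans sD1 DE).
have G2E : C :|: D2 \subset edges e by rewrite subUset CE (subset_trans (subsetDl D D1) DE).
have degs : forall v, deg (C :|: D1) v <= k /\ deg (C :|: D2) v <= k.
  move=> v; rewrite !degU //.
  have h1 := col_deg v C1; have h2 := col_deg v C2.
  rewrite (degID F1 F2) -/C -/X in h1.
  rewrite (degID F2 F1) setIC -/C -/Y in h2.
  have [b1 b2] := hb v; rewrite /D (degU _ dXY) -/D -/D2 in b1 b2.
  clear -h1 h2 b1 b2 k0; lia.
have n1 := nu_ge G1E (deg_col tr k0 G1E (fun v => (degs v).1)).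
have n2 := nu_ge G2E (deg_col tr k0 G2E (fun v => (degs v).2)).
rewrite !cardU_disj // in n1 n2.
have cD12 := cardsID D1 D; rewrite (setIidPr sD1) -/D2 in cD12.
have cD := cardU_disj dXY; rewrite -/D in cD.
have c1 := cardsID F2 F1; rewrite -/C -/X in c1.
have c2 := cardsID F1 F2; rewrite setIC -/C -/Y in c2.
clear -n1 n2 cD12 cD c1 c2; lia.
Qed.
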